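(* Let $n,B$ be powers of $2$ with $2\le B\le n$, let $F\ge2$ be an even integer, $\epsilon=(1/4)^{F-1}$, and let $\hat G\in\mathbb{R}^n$ be a flat filter with $B$ buckets and sharpness $F$. Let $\sigma$ be uniformly random among the odd integers in $[n]$ and $b$ independently uniform in $[n]$. Then for all $f\neq f'$ in $[n]$ and all $\lambda\ge0$, \[\mathbb{E}\exp\bigl(\lambda\hat G_{o_{f,\sigma,b}(f')}\bigr)\le M(\lambda):=e^{\lambda\epsilon}\Bigl[\Bigl(\frac2B+\frac1n\Bigr)\bigl(e^{\lambda(1-\epsilon)}-1\bigr)+1\Bigr].\]
   Context: A flat filter with $B$ buckets and sharpness $F$ is a sequence $\hat G\in\mathbb{R}^n$ indexed by $\mathbb{Z}_n$ (with representatives $f\in\{-n/2,\dots,n/2-1\}$), symmetric about $0$, such that (1) $\hat G_f\in[0,1]$ for all $f$; (2) $\hat G_f\ge1-(1/4)^{F-1}$ whenever $|f|\le n/(2B)$; (3) $\hat G_f\le(1/4)^{F-1}\bigl(\frac{n}{B|f|}\bigr)^{F-1}$ whenever $|f|\ge n/B$. For $\sigma,b\in[n]$: $\pi_{\sigma,b}(f)=\sigma(f-b)\bmod n$; $h_{\sigma,b}(f)=\lfloor (B/n)\pi_{\sigma,b}(f)+1/2\rfloor$; $o_{f,\sigma,b}(f')=\pi_{\sigma,b}(f')-(n/B)h_{\sigma,b}(f)\bmod n$. *)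

(* Defs.v *)
From Stdlib Require Import Reals ZArith List Lia Lra.
Open Scope R_scope.

(* Elements of Z_n are represented by integers f with 0 <= f < n. *)

(* the representative of f in {-n/2, ..., n/2 - 1} *)
Definition zrep (n f : Z) : Z :=
  if (f <? n / 2)%Z then f else (f - n)%Z.

Definition zabs_n (n f : Z) : Z := Z.abs (zrep n f).

Definition is_pow2 (m : nat) : Prop := exists k : nat, m = (2 ^ k)%nat.

Definition flat_filter (n B F : nat) (G : Z -> R) : Prop :=
  let nZ := Z.of_nat n in
  let eps := (/4) ^ (F - 1) in
  (forall f, (0 <= f < nZ)%Z -> G f = G ((- f) mod nZ)%Z) /\
  (forall f, (0 <= f < nZ)%Z -> 0 <= G f <= 1) /\
  (forall f, (0 <= f < nZ)%Z ->
     IZR (zabs_n nZ f) <= INR n / (2 * INR B) -> G f >= 1 - eps) /\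
  (forall f, (0 <= f < nZ)%Z ->
     IZR (zabs_n nZ f) >= INR n / INR B ->
     G f <= eps * (INR n / (INR B * IZR (zabs_n nZ f))) ^ (F - 1)).

Definition pi_sb (n sigma b f : Z) : Z := (sigma * (f - b)) mod n.

(* h_{sigma,b}(f) = floor((B/n) pi(f) + 1/2) = floor((2 B pi(f) + n) / (2 n)) *)
Definition h_sb (n B sigma b f : Z) : Z :=
  ((2 * B * pi_sb n sigma b f + n) / (2 * n))%Z.

(* o_{f,sigma,b}(f') = pi(f') - (n/B) h(f) mod n  (n/B is an integer) *)
Definition o_sb (n B f sigma b f' : Z) : Z :=
  (pi_sb n sigma b f' - (n / B) * h_sb n B sigma b f) mod n.

Definition sumR (l : list nat) (g : nat -> R) : R :=
  fold_right Rplus 0 (map g l).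

Definition odds (n : nat) : list nat := filter Nat.odd (seq 0 n).

(* E over sigma uniform among odd elements of [n] and b uniform in [n] *)
Definition expect_sb (n : nat) (X : Z -> Z -> R) : R :=
  / (INR (length (odds n)) * INR n) *
  sumR (odds n) (fun s => sumR (seq 0 n) (fun b => X (Z.of_nat s) (Z.of_nat b))).

(* Main.v *)
Require Import Defs.
From Stdlib Require Import Reals ZArith List Lia Lra Znumtheory Zpow_facts.
Open Scope Z_scope.

Lemma mod_eq_of_diff a b k n : a = b + k * n -> a mod n = b mod n.
Proof. intros ->. apply Z.mod_add. Abort.

Lemma mod_eq_of_diff a b k n : n <> 0 -> a = b + k * n -> a mod n = b mod n.
Proof. intros Hn ->. apply Z.mod_add; auto. Qed.

Lemma mod_eq_div a b n : n <> 0 -> a mod n = b mod n -> (n | a - b).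
Proof.
  intros Hn H. exists (a / n - b / n).
  rewrite (Z.div_mod a n Hn) at 1. rewrite (Z.div_mod b n Hn) at 1. rewrite H. ring.
Qed.

Lemma odd_relprime_pow2 e u : 0 <= e -> Z.odd u = true -> rel_prime (2 ^ e) u.
Proof.
  intros He Hu. apply rel_prime_sym. apply rel_prime_Zpower_r; auto.
  apply rel_prime_sym. apply Zgcd_1_rel_prime.
  rewrite <- Z.gcd_mod by lia. rewrite Zmod_odd, Hu. reflexivity.
Qed.

Lemma pow2_odd_div e u x : 0 <= e -> Z.odd u = true -> (2 ^ e | u * x) -> (2 ^ e | x).
Proof. intros. eapply Gauss; eauto. apply odd_relprime_pow2; auto. Qed.

Lemma div_same_quot x y q : 0 < q -> (q | x - y) -> x / q = y / q -> x = y.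
Proof.
  intros Hq [c Hc] H.
  pose proof (Z.div_mod x q ltac:(lia)). pose proof (Z.div_mod y q ltac:(lia)).
  pose proof (Z.mod_pos_bound x q Hq). pose proof (Z.mod_pos_bound y q Hq).
  assert (c = 0) by nia. subst. lia.
Qed.

Lemma two_adic d : d <> 0 -> exists s u, 0 <= s /\ Z.odd u = true /\ d = 2 ^ s * u.
Proof.
  intros Hd. remember (Z.abs_nat d) as N eqn:HN.
  revert d Hd HN. induction N as [N IH] using (well_founded_induction lt_wf).
  intros d Hd HN.
  destruct (Z.odd d) eqn:Ho.
  - exists 0, d. split; [lia|split; [auto|ring]].
  - assert (Hd2 : d = 2 * (d / 2)).
    { pose proof (Z.div_mod d 2 ltac:(lia)). rewrite Zmod_odd, Ho in H. lia. }
    assert (Hlt : (Z.abs_nat (d / 2) < N)%nat).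
    { subst N. lia.
      }
    destruct (IH (Z.abs_nat (d / 2)) Hlt (d/2) ltac:(lia) eq_refl) as [s [u [Hs [Hu He]]]].
    exists (s + 1), u. repeat split; auto; try lia.
    rewrite Z.pow_add_r by lia. lia.
Qed.
Open Scope Z_scope.

Lemma NoDup_map_inj (l : list nat) (g : nat -> nat) :
  NoDup l -> (forall x y, In x l -> In y l -> g x = g y -> x = y) -> NoDup (map g l).
Proof.
  induction l as [|a l IH]; intros Hn Hi; simpl; constructor.
  - intros Hin. apply in_map_iff in Hin as [x [Hx Hxl]].
    inversion Hn; subst. assert (x = a) by (apply Hi; simpl; auto). subst; contradiction.
  - inversion Hn; subst. apply IH; auto. intros; apply Hi; simpl; auto.
Qed.

Lemma inj_len (l l' : list nat) (g : nat -> nat) :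
  NoDup l -> (forall x, In x l -> In (g x) l') ->
  (forall x y, In x l -> In y l -> g x = g y -> x = y) -> (length l <= length l')%nat.
Proof.
  intros Hn Hin Hi. rewrite <- (length_map g l). apply NoDup_incl_length.
  - apply NoDup_map_inj; auto.
  - intros y Hy. apply in_map_iff in Hy as [x [<- Hx]]. auto.
Qed.

Lemma zrep_div n a : 0 < n -> (n | a - zrep n (a mod n)).
Proof.
  intros Hn. unfold zrep. destruct (a mod n <? n / 2).
  - apply mod_eq_div; [lia|]. rewrite Z.mod_mod; lia.
  - exists (a / n + 1). pose proof (Z.div_mod a n ltac:(lia)). lia.
Qed.

Lemma odd_form x : Z.odd x = true -> x = 2 * (x / 2) + 1.
Proof. intros H. pose proof (Z.div_mod x 2 ltac:(lia)). rewrite Zmod_odd, H in H0. lia. Qed.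

Lemma qr_uniq q1 q2 w1 w2 M : 0 <= w1 < M -> 0 <= w2 < M -> q1*M + w1 = q2*M+w2 -> q1 = q2 /\ w1 = w2.
Proof.
  intros H1 H2 H. assert (Hd : (q1 - q2) * M = w2 - w1) by lia.
  destruct (Z.lt_trichotomy (q1 - q2) 0) as [Hl|[He|Hg]].
  - assert ((q1 - q2) * M <= - M) by nia. lia.
  - rewrite He in Hd. lia.
  - assert ((q1 - q2) * M >= M) by nia. lia.
Qed.

Lemma ar1 S K u t1 t2 c1 c2 z1 z2 r N m : N = 2*S*K -> (2*t1+1)*(S*u) + r - z1 = N*c1 ->
  (2*t2+1)*(S*u)+r-z2 = N*c2 -> z1 + m - (z2 + m) = 2*S*((t1-t2)*u - (c1-c2)*K).
Proof. intros -> H1 H2. nia. Qed.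

Lemma ar2 S K u X Y z r N c1 c2 : 0 < S -> N = S*K -> X*(S*u)+r - z = N*c1 -> Y*(S*u)+r-z = N*c2 ->
  u*(X-Y) = (c1-c2)*K.
Proof. intros HS -> H1 H2. apply (Z.mul_reg_l _ _ S); [lia|]. nia. Qed.

Lemma ar3 S K u t c z r N m : N = 2*S*K -> (2*t+1)*(S*u) + r - z = N*c -> u = 2*(u/2)+1 ->
  - m < z < m -> - m <= 2 * r < m -> 2 * m <= S -> 0 < S -> False.
Proof.
  intros -> H Hu Hz Hr Hm HS. set (h := (2 * t + 1) * (u / 2) + t - c * K).
  assert (Hv : z - r = 2 * S * h + S) by (unfold h; nia).
  clearbody h. destruct (Z.le_gt_cases 0 h); nia.
Qed.

Lemma bound_helper q M w S (m : nat) : 0 <= q < S -> 0 <= w < M -> Z.of_nat m = S * M ->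
  (0 <= Z.to_nat (q * M + w) < 0 + m)%nat.
Proof. intros Hq Hw Hm. assert (q * M + w < S * M) by nia. assert (0 <= q * M) by nia. lia. Qed.

Lemma big_helper a b X : a = 2 * b * X -> 1 <= X -> 0 <= b -> 2 * b <= a.
Proof. intros -> H1 H2. nia. Qed.

Lemma key (k j s u r : Z) (n m : nat) (l : list nat) :
  Z.of_nat n = 2 ^ k -> Z.of_nat m = 2 ^ j -> 0 <= j < k -> 0 <= s < k ->
  Z.odd u = true -> - Z.of_nat m <= 2 * r < Z.of_nat m ->
  (forall x, In x l -> Nat.odd x = true /\ (x < n)%nat) -> NoDup l ->
  (length (filter (fun x => Z.abs (zrep (Z.of_nat n) ((Z.of_nat x * (2 ^ s * u) + r) mod Z.of_nat n)) <? Z.of_nat m)%Z l) <= m)%nat.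
Proof.
  intros Hn Hm Hj Hs Hu Hr Hl Hnd.
  set (nZ := Z.of_nat n) in *. set (mZ := Z.of_nat m) in *.
  set (d := 2 ^ s * u).
  set (P := fun x : nat => Z.abs (zrep nZ ((Z.of_nat x * d + r) mod nZ)) <? mZ).
  assert (Hbad : forall x, In x (filter P l) ->
     exists c t, Z.of_nat x = 2 * t + 1 /\ (x < n)%nat /\
       - mZ < zrep nZ ((Z.of_nat x * d + r) mod nZ) < mZ /\
       Z.of_nat x * d + r - zrep nZ ((Z.of_nat x * d + r) mod nZ) = nZ * c).
  { intros x Hx. apply filter_In in Hx as [Hx Hp]. unfold P in Hp.
    apply Z.ltb_lt in Hp. destruct (Hl x Hx) as [Ho Hlt].
    assert (Hn0 : 0 < nZ) by (rewrite Hn; apply Z.pow_pos_nonneg; lia).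
    destruct (zrep_div nZ (Z.of_nat x * d + r) Hn0) as [c Hc].
    apply Nat.odd_spec in Ho as [t0 Ht0].
    exists c, (Z.of_nat t0). split.
    - lia.
    - split; [auto|split; [lia|lia]]. }
  assert (E1 : 2 ^ k = 2 ^ s * 2 ^ (k - s)) by (rewrite <- Z.pow_add_r by lia; f_equal; lia).
  assert (E2 : 2 ^ (s + 1) = 2 * 2 ^ s) by (rewrite Z.pow_add_r by lia; lia).
  assert (E3 : 2 ^ k = 2 ^ (s+1) * 2 ^ (k - s - 1)) by (rewrite <- Z.pow_add_r by lia; f_equal; lia).
  assert (Hps : 0 < 2 ^ s) by (apply Z.pow_pos_nonneg; lia).
  assert (Hpk : 0 < 2 ^ (k - s)) by (apply Z.pow_pos_nonneg; lia).
  assert (Hpk1 : 0 < 2 ^ (k - s - 1)) by (apply Z.pow_pos_nonneg; lia).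
  destruct (Z.le_gt_cases s j) as [Hsj | Hsj].
  - assert (E4 : 2 ^ j = 2 ^ s * 2 ^ (j - s)) by (rewrite <- Z.pow_add_r by lia; f_equal; lia).
    assert (Hpj : 0 < 2 ^ (j - s)) by (apply Z.pow_pos_nonneg; lia).
    set (g := fun x : nat => Z.to_nat ((Z.of_nat x / 2 ^ (k - s)) * 2 ^ (j - s)
                + (zrep nZ ((Z.of_nat x * d + r) mod nZ) + mZ) / 2 ^ (s + 1))).
    rewrite <- (length_seq m 0). apply inj_len with (g := g).
    + apply NoDup_filter; auto.
    + intros x Hx. destruct (Hbad x Hx) as [c [t [Ht [Hlt [Hz Hc]]]]].
      apply in_seq. unfold g.
      set (z := zrep nZ ((Z.of_nat x * d + r) mod nZ)) in *.
      assert (Hq : Z.of_nat x / 2 ^ (k - s) < 2 ^ s).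
      { apply Z.div_lt_upper_bound; lia. }
      assert (Hq0 : 0 <= Z.of_nat x / 2 ^ (k - s)) by (apply Z.div_pos; lia).
      assert (Htt : (z + mZ) / 2 ^ (s + 1) < 2 ^ (j - s)).
      { apply Z.div_lt_upper_bound; lia. }
      assert (Ht0 : 0 <= (z + mZ) / 2 ^ (s + 1)) by (apply Z.div_pos; lia).
      apply (bound_helper _ _ _ (2 ^ s)); [lia|lia|]. rewrite <- E4. exact Hm.
    + intros x y Hx Hy Hg. 
      destruct (Hbad x Hx) as [c1 [t1 [Ht1 [Hlt1 [Hz1 Hc1]]]]].
      destruct (Hbad y Hy) as [c2 [t2 [Ht2 [Hlt2 [Hz2 Hc2]]]]].
      unfold g in Hg.
      set (z1 := zrep nZ ((Z.of_nat x * d + r) mod nZ)) in *.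
      set (z2 := zrep nZ ((Z.of_nat y * d + r) mod nZ)) in *.
      set (q1 := Z.of_nat x / 2 ^ (k - s)) in *.
      set (q2 := Z.of_nat y / 2 ^ (k - s)) in *.
      set (w1 := (z1 + mZ) / 2 ^ (s + 1)) in *.
      set (w2 := (z2 + mZ) / 2 ^ (s + 1)) in *.
      assert (Hq1 : 0 <= q1) by (apply Z.div_pos; lia).
      assert (Hq2 : 0 <= q2) by (apply Z.div_pos; lia).
      assert (Hw1 : 0 <= w1 < 2 ^ (j - s)) by (split; [apply Z.div_pos| apply Z.div_lt_upper_bound]; lia).
      assert (Hw2 : 0 <= w2 < 2 ^ (j - s)) by (split; [apply Z.div_pos| apply Z.div_lt_upper_bound]; lia).
      apply Z2Nat.inj in Hg; [|nia|nia].
      destruct (qr_uniq q1 q2 w1 w2 (2 ^ (j - s)) Hw1 Hw2 ltac:(lia)) as [Hqq Hww].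
      assert (Hzz : z1 + mZ = z2 + mZ).
      { apply (div_same_quot _ _ (2 ^ (s + 1))); auto; try lia.
        exists ((t1 - t2) * u - (c1 - c2) * 2 ^ (k - s - 1)).
        rewrite (ar1 (2^s) (2 ^ (k - s - 1)) u t1 t2 c1 c2 z1 z2 r nZ mZ); [rewrite E2; ring| |rewrite <- Ht1; exact Hc1|rewrite <- Ht2; exact Hc2].
        rewrite Hn, E3, E2. ring. }
      assert (Hdv : (2 ^ (k - s) | u * (Z.of_nat x - Z.of_nat y))).
      { assert (Hzz' : z1 = z2) by lia.
        exists (c1 - c2). apply (ar2 (2^s) (2^(k-s)) u _ _ z1 r nZ).
        - lia.
        - rewrite Hn; exact E1.
        - exact Hc1.
        - rewrite Hzz'; exact Hc2. }
      apply pow2_odd_div in Hdv; [|lia|auto].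
      apply Nat2Z.inj. apply (div_same_quot _ _ (2 ^ (k - s))); [lia|exact Hdv|exact Hqq].
  - apply Nat.le_trans with (length (@nil nat)); [|simpl; lia].
    apply inj_len with (g := fun x => x).
    + apply NoDup_filter; auto.
    + intros x Hx. exfalso. destruct (Hbad x Hx) as [c [t [Ht [Hlt [Hz Hc]]]]].
      set (z := zrep nZ ((Z.of_nat x * d + r) mod nZ)) in *.
      assert (E5 : 2 ^ s = 2 ^ (j + 1) * 2 ^ (s - j - 1)) by (rewrite <- Z.pow_add_r by lia; f_equal; lia).
      assert (E6 : 2 ^ (j + 1) = 2 * 2 ^ j) by (rewrite Z.pow_add_r by lia; lia).
      assert (Hp5 : 0 < 2 ^ (s - j - 1)) by (apply Z.pow_pos_nonneg; lia).
      assert (Hbig : 2 * mZ <= 2 ^ s) by (apply (big_helper _ _ (2 ^ (s - j - 1))); [rewrite E5, E6, Hm; ring|lia|lia]).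
      apply (ar3 (2^s) (2 ^ (k - s - 1)) u t c z r nZ mZ);
        [rewrite Hn, E3, E2; ring | rewrite <- Ht; exact Hc | apply odd_form; auto | lia | lia | lia | lia].
    + intros x y Hx _ _. exfalso. destruct (Hbad x Hx) as [c [t [Ht [Hlt [Hz Hc]]]]].
      set (z := zrep nZ ((Z.of_nat x * d + r) mod nZ)) in *.
      assert (E5 : 2 ^ s = 2 ^ (j + 1) * 2 ^ (s - j - 1)) by (rewrite <- Z.pow_add_r by lia; f_equal; lia).
      assert (E6 : 2 ^ (j + 1) = 2 * 2 ^ j) by (rewrite Z.pow_add_r by lia; lia).
      assert (Hp5 : 0 < 2 ^ (s - j - 1)) by (apply Z.pow_pos_nonneg; lia).
      assert (Hbig : 2 * mZ <= 2 ^ s) by (apply (big_helper _ _ (2 ^ (s - j - 1))); [rewrite E5, E6, Hm; ring|lia|lia]).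
      apply (ar3 (2^s) (2 ^ (k - s - 1)) u t c z r nZ mZ);
        [rewrite Hn, E3, E2; ring | rewrite <- Ht; exact Hc | apply odd_form; auto | lia | lia | lia | lia].
Qed.
Open Scope Z_scope.

Definition nsum (l : list nat) (g : nat -> nat) : nat := fold_right Nat.add 0%nat (map g l).

Lemma nsum_le l g h : (forall x, In x l -> (g x <= h x)%nat) -> (nsum l g <= nsum l h)%nat.
Proof. induction l; unfold nsum in *; simpl; intros H; [lia|]. specialize (IHl (fun x Hx => H x (or_intror Hx))). specialize (H a (or_introl eq_refl)). unfold nsum in *; simpl. lia. Qed.

Lemma nsum_const l c : nsum l (fun _ => c) = (length l * c)%nat.
Proof. induction l; unfold nsum in *; simpl; [reflexivity|]. rewrite IHl. lia. Qed.

Lemma nsum_plus l g h : nsum l (fun x => g x + h x)%nat = (nsum l g + nsum l h)%nat.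
Proof. induction l; unfold nsum in *; simpl; [reflexivity|]. rewrite IHl. lia. Qed.

Lemma nsum_ind l (P : nat -> bool) : nsum l (fun x => if P x then 1 else 0)%nat = length (filter P l).
Proof. induction l; unfold nsum in *; simpl; [reflexivity|]. rewrite IHl. destruct (P a); simpl; lia. Qed.

Lemma nsum_swap (l1 l2 : list nat) (T : nat -> nat -> bool) :
  nsum l1 (fun x => length (filter (fun y => T x y) l2)) =
  nsum l2 (fun y => length (filter (fun x => T x y) l1)).
Proof.
  induction l1 as [|a l1 IH]; simpl.
  - transitivity (nsum l2 (fun _ => 0%nat)); [rewrite nsum_const; unfold nsum; simpl; lia| reflexivity].
  - unfold nsum at 1. simpl. fold (nsum l1 (fun x => length (filter (fun y => T x y) l2))).
    rewrite IH.
    transitivity (nsum l2 (fun y => (if T a y then 1 else 0) + length (filter (fun x => T x y) l1))%nat).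
    + rewrite nsum_plus, nsum_ind. reflexivity.
    + unfold nsum. f_equal. apply map_ext. intros y. destruct (T a y); reflexivity.
Qed.

Lemma length_odds t : length (odds (2 * t)) = t.
Proof.
  induction t; [reflexivity|].
  unfold odds in *. replace (2 * S t)%nat with (2 * t + 2)%nat by lia.
  rewrite seq_app, filter_app, length_app, IHt. simpl.
  replace (t + (t + 0))%nat with (2 * t)%nat by lia. rewrite Nat.odd_even. replace (S (2 * t)) with (2 * t + 1)%nat by lia. rewrite Nat.odd_odd. simpl. lia.
Qed.

Open Scope R_scope.

Lemma sumR_le l g h : (forall x, In x l -> g x <= h x) -> sumR l g <= sumR l h.
Proof. induction l; unfold sumR in *; simpl; intros H; [lra|].
  specialize (IHl (fun x Hx => H x (or_intror Hx))). specialize (H a (or_introl eq_refl)). lra. Qed.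

Lemma sumR_affine l a b g : sumR l (fun x => a + b * g x) = a * INR (length l) + b * sumR l g.
Proof. induction l as [|a0 l IHl]; unfold sumR in *; [simpl; ring|]. cbn [map fold_right]. rewrite IHl. change (length (a0::l)) with (S (length l)). rewrite S_INR. ring. Qed.

Lemma sumR_INR l g : sumR l (fun x => INR (g x)) = INR (nsum l g).
Proof. induction l; unfold sumR, nsum in *; simpl; auto. rewrite IHl, plus_INR. ring. Qed.

Lemma sumR_ind l (P : nat -> bool) : sumR l (fun x => if P x then 1 else 0) = INR (length (filter P l)).
Proof. induction l as [|a l IHl]; unfold sumR in *; [simpl; auto|]. cbn [map fold_right filter]. rewrite IHl. destruct (P a); [change (length (a :: filter P l)) with (S (length (filter P l))); rewrite S_INR|]; ring. Qed.

Lemma exp_le x y : x <= y -> exp x <= exp y.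
Proof. intros H. destruct (Rle_lt_or_eq_dec _ _ H) as [H' | ->]; [left; apply exp_increasing; auto|lra]. Qed.

Lemma pow_le_one x k : 0 <= x <= 1 -> x ^ k <= 1.
Proof. intros H. induction k; simpl; [lra|]. assert (0 <= x ^ k) by (apply pow_le; lra). nra. Qed.
Open Scope Z_scope.

Lemma o_form (nZ BZ m f f' s b : Z) : nZ <> 0 -> nZ / BZ = m ->
  o_sb nZ BZ f s b f' = (s * (f' - f) + (pi_sb nZ s b f - m * h_sb nZ BZ s b f)) mod nZ.
Proof.
  intros Hn Hm. unfold o_sb. rewrite Hm.
  apply mod_eq_of_diff with (k := (s * (f - b)) / nZ - (s * (f' - b)) / nZ); auto.
  unfold pi_sb. rewrite !Z.mod_eq by auto. ring.
Qed.

Lemma Rf_bounds nZ BZ m p : 0 < BZ -> 0 < m -> nZ = BZ * m ->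
  - m <= 2 * (p - m * ((2 * BZ * p + nZ) / (2 * nZ))) < m.
Proof.
  intros HB Hm ->.
  replace (2 * BZ * p + BZ * m) with (BZ * (2 * p + m)) by ring.
  replace (2 * (BZ * m)) with (BZ * (2 * m)) by ring.
  rewrite Z.div_mul_cancel_l by lia.
  pose proof (Z.div_mod (2 * p + m) (2 * m) ltac:(lia)).
  pose proof (Z.mod_pos_bound (2 * p + m) (2 * m) ltac:(lia)).
  lia.
Qed.

Lemma pi_inj nZ k s f b1 b2 : nZ = 2 ^ k -> 0 <= k -> Z.odd s = true ->
  0 <= b1 < nZ -> 0 <= b2 < nZ -> pi_sb nZ s b1 f = pi_sb nZ s b2 f -> b1 = b2.
Proof.
  intros Hn Hk Hs H1 H2 H. unfold pi_sb in H.
  assert (Hn0 : 0 < nZ) by (rewrite Hn; apply Z.pow_pos_nonneg; lia).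
  apply mod_eq_div in H; [|lia].
  replace (s * (f - b1) - s * (f - b2)) with (s * (b2 - b1)) in H by ring.
  rewrite Hn in H. apply pow2_odd_div in H; auto. rewrite <- Hn in H.
  symmetry. apply (div_same_quot _ _ nZ); auto.
  rewrite !Z.div_small; lia.
Qed.
Open Scope R_scope.
Lemma final_ineq c0 A tot L b M : 0<c0 -> 0<=A -> 0<L -> 0<b -> 0<M -> 2*L = b*M -> 0 <= tot <= 2*L*M ->
  /(L*(2*L))*(c0*(2*L)*L + c0*A*tot) <= c0*((2/b + 1/(2*L))*A + 1).
Proof.
  intros Hc HA HL Hb HM HLM Ht.
  assert (E : /(L*(2*L))*(c0*(2*L)*L + c0*A*tot) = c0 + c0*A*(tot/(2*L*L))) by (field; lra).
  assert (E2 : 2/b = M/L) by (field_simplify_eq; lra).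
  rewrite E, E2.
  assert (Hq : tot/(2*L*L) <= M/L).
  { unfold Rdiv. apply Rmult_le_reg_r with (2*L*L); [nra|].
    replace (tot * / (2 * L * L) * (2 * L * L)) with tot by (field; lra).
    replace (M * / L * (2 * L * L)) with (2*L*M) by (field; lra). lra. }
  assert (0 <= 1/(2*L)) by (unfold Rdiv; apply Rmult_le_pos; [lra| left; apply Rinv_0_lt_compat; lra]).
  assert (0 <= c0 * A) by nra.
  assert (c0*A*(tot/(2*L*L)) <= c0*A*(M/L)) by (apply Rmult_le_compat_l; auto).
  nra.
Qed.

Close Scope Z_scope.
Open Scope R_scope.

Theorem lemma5p6 (n B F : nat) (G : Z -> R)
  (Hn : is_pow2 n) (HB : is_pow2 B) (HB2 : (2 <= B)%nat) (HBn : (B <= n)%nat)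
  (HF2 : (2 <= F)%nat) (HFe : Nat.Even F)
  (HG : flat_filter n B F G)
  (f f' : nat) (Hf : (f < n)%nat) (Hf' : (f' < n)%nat) (Hff : f <> f')
  (lam : R) (Hlam : 0 <= lam) :
  let eps := (/4) ^ (F - 1) in
  expect_sb n (fun sigma b =>
     exp (lam * G (o_sb (Z.of_nat n) (Z.of_nat B) (Z.of_nat f) sigma b (Z.of_nat f'))))
  <= exp (lam * eps) *
     ((2 / INR B + 1 / INR n) * (exp (lam * (1 - eps)) - 1) + 1).
Proof.
  intros eps.
  destruct Hn as [a Ha]. destruct HB as [c Hc].
  assert (Hc1 : (1 <= c)%nat).
  { destruct c; [simpl in Hc; lia|lia]. }
  assert (Hca : (c <= a)%nat).
  { destruct (Nat.le_gt_cases c a) as [H|H]; auto.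
    assert (2 ^ a < 2 ^ c)%nat by (apply Nat.pow_lt_mono_r; lia). lia. }
  set (m := (2 ^ (a - c))%nat).
  assert (Hnm : n = (B * m)%nat).
  { subst n B m. rewrite <- Nat.pow_add_r. f_equal. lia. }
  set (N := (2 ^ (a - 1))%nat).
  assert (HnN : n = (2 * N)%nat).
  { subst n N. rewrite <- (Nat.pow_1_r 2) at 2. rewrite <- Nat.pow_add_r. f_equal. lia. }
  assert (Hm0 : (0 < m)%nat) by (subst m; apply Nat.neq_0_lt_0, Nat.pow_nonzero; lia).
  assert (HN0 : (0 < N)%nat) by (subst N; apply Nat.neq_0_lt_0, Nat.pow_nonzero; lia).
  assert (HnZ : Z.of_nat n = (2 ^ Z.of_nat a)%Z) by (rewrite Ha, Nat2Z.inj_pow; reflexivity).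
  assert (HmZ : Z.of_nat m = (2 ^ Z.of_nat (a - c))%Z) by (unfold m; rewrite Nat2Z.inj_pow; reflexivity).
  assert (HnBm : Z.of_nat n = (Z.of_nat B * Z.of_nat m)%Z) by (rewrite Hnm; lia).
  assert (HdivZ : (Z.of_nat n / Z.of_nat B)%Z = Z.of_nat m).
  { rewrite HnBm. rewrite Z.mul_comm. apply Z.div_mul. lia. }
  assert (Hd0 : (Z.of_nat f' - Z.of_nat f <> 0)%Z) by lia.
  destruct (two_adic _ Hd0) as [s [u [Hs [Hu Hd]]]].
  assert (Hsa : (s < Z.of_nat a)%Z).
  { destruct (Z.le_gt_cases (Z.of_nat a) s) as [H|H]; auto. exfalso.
    assert (Hle : (2 ^ Z.of_nat a <= 2 ^ s)%Z) by (apply Z.pow_le_mono_r; lia).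
    assert (Hu1 : (1 <= Z.abs u)%Z) by (destruct u; simpl in Hu; lia).
    assert (Hps : (0 < 2 ^ s)%Z) by (apply Z.pow_pos_nonneg; lia).
    assert (Habs : (Z.abs (Z.of_nat f' - Z.of_nat f) = 2 ^ s * Z.abs u)%Z).
    { rewrite Hd, Z.abs_mul, (Z.abs_eq (2 ^ s)); lia. }
    nia. }
  set (badb := fun (sg b : nat) =>
     (Z.abs (zrep (Z.of_nat n) (o_sb (Z.of_nat n) (Z.of_nat B) (Z.of_nat f) (Z.of_nat sg) (Z.of_nat b) (Z.of_nat f'))) <? Z.of_nat m)%Z).
  set (T := fun (sg p : nat) =>
     (Z.abs (zrep (Z.of_nat n) ((Z.of_nat sg * (2 ^ s * u) +
        (Z.of_nat p - Z.of_nat m * ((2 * Z.of_nat B * Z.of_nat p + Z.of_nat n) / (2 * Z.of_nat n)))) mod Z.of_nat n)) <? Z.of_nat m)%Z).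
  assert (Hodds : forall x, In x (odds n) -> Nat.odd x = true /\ (x < n)%nat).
  { intros x Hx. unfold odds in Hx. apply filter_In in Hx as [Hx Ho]. apply in_seq in Hx. split; auto; lia. }
  assert (Hnd : NoDup (odds n)) by (apply NoDup_filter, seq_NoDup).
  assert (Hcnt : (nsum (odds n) (fun sg => length (filter (badb sg) (seq 0 n))) <= n * m)%nat).
  { apply Nat.le_trans with (nsum (odds n) (fun sg => length (filter (fun p => T sg p) (seq 0 n)))).
    - apply nsum_le. intros sg Hsg. destruct (Hodds sg Hsg) as [Hso Hsn].
      assert (HsoZ : Z.odd (Z.of_nat sg) = true).
      { apply Nat.odd_spec in Hso as [t Ht]. subst sg. rewrite Nat2Z.inj_add, Nat2Z.inj_mul. simpl (Z.of_nat 2). simpl (Z.of_nat 1).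
        rewrite Z.add_comm, Z.odd_add_mul_2. reflexivity. }
      apply inj_len with (g := fun b => Z.to_nat (pi_sb (Z.of_nat n) (Z.of_nat sg) (Z.of_nat b) (Z.of_nat f))).
      + apply NoDup_filter, seq_NoDup.
      + intros b Hb. apply filter_In in Hb as [Hb Hbad]. apply in_seq in Hb.
        assert (Hpi : (0 <= pi_sb (Z.of_nat n) (Z.of_nat sg) (Z.of_nat b) (Z.of_nat f) < Z.of_nat n)%Z).
        { unfold pi_sb. apply Z.mod_pos_bound. lia. }
        apply filter_In. split; [apply in_seq; lia|].
        unfold T. rewrite Z2Nat.id by lia.
        unfold badb in Hbad. rewrite (o_form _ _ (Z.of_nat m)) in Hbad by (auto; lia).
        unfold h_sb in Hbad. rewrite Hd in Hbad. exact Hbad.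
      + intros b1 b2 Hb1 Hb2 Heq.
        apply filter_In in Hb1 as [Hb1 _]. apply filter_In in Hb2 as [Hb2 _].
        apply in_seq in Hb1. apply in_seq in Hb2.
        assert (Hp1 : (0 <= pi_sb (Z.of_nat n) (Z.of_nat sg) (Z.of_nat b1) (Z.of_nat f))%Z).
        { unfold pi_sb. apply Z.mod_pos_bound. lia. }
        assert (Hp2 : (0 <= pi_sb (Z.of_nat n) (Z.of_nat sg) (Z.of_nat b2) (Z.of_nat f))%Z).
        { unfold pi_sb. apply Z.mod_pos_bound. lia. }
        apply Z2Nat.inj in Heq; auto.
        apply Nat2Z.inj. apply (pi_inj (Z.of_nat n) (Z.of_nat a) (Z.of_nat sg) (Z.of_nat f) _ _ HnZ ltac:(lia) HsoZ); auto; lia.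
    - rewrite (nsum_swap (odds n) (seq 0 n) T).
      apply Nat.le_trans with (nsum (seq 0 n) (fun _ => m)); [|rewrite nsum_const, length_seq; lia].
      apply nsum_le. intros p Hp.
      apply (key (Z.of_nat a) (Z.of_nat (a - c)) s u); auto; try lia.
      apply Rf_bounds; lia. }
  assert (Heps : 0 <= eps <= 1).
  { unfold eps. split; [apply pow_le; lra| apply pow_le_one; lra]. }
  set (c0 := exp (lam * eps)).
  set (A := exp (lam * (1 - eps)) - 1).
  assert (HA : 0 <= A).
  { unfold A. assert (exp 0 <= exp (lam * (1 - eps))) by (apply exp_le; nra). rewrite exp_0 in H. lra. }
  assert (Hc0 : 0 < c0) by apply exp_pos.
  destruct HG as [_ [HG1 [_ HG3]]].
  assert (HnR : INR n = INR B * INR m) by (rewrite Hnm, mult_INR; reflexivity).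
  assert (HmR : 0 < INR m) by (apply lt_0_INR; lia).
  assert (HBR : 0 < INR B) by (apply lt_0_INR; lia).
  assert (Hpt : forall sg b, (b < n)%nat ->
     exp (lam * G (o_sb (Z.of_nat n) (Z.of_nat B) (Z.of_nat f) (Z.of_nat sg) (Z.of_nat b) (Z.of_nat f')))
     <= c0 + (c0 * A) * (if badb sg b then 1 else 0)).
  { intros sg b Hb.
    assert (Ho : (0 <= o_sb (Z.of_nat n) (Z.of_nat B) (Z.of_nat f) (Z.of_nat sg) (Z.of_nat b) (Z.of_nat f') < Z.of_nat n)%Z).
    { unfold o_sb. apply Z.mod_pos_bound. lia. }
    destruct (HG1 _ Ho) as [G0 G1].
    destruct (badb sg b) eqn:Eb.
    - assert (E : c0 + c0 * A * 1 = exp lam).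
      { unfold c0, A. replace lam with (lam * eps + lam * (1 - eps)) at 4 by ring.
        rewrite exp_plus. ring. }
      rewrite E. apply exp_le. nra.
    - assert (Hz : (Z.of_nat m <= Z.abs (zrep (Z.of_nat n) (o_sb (Z.of_nat n) (Z.of_nat B) (Z.of_nat f) (Z.of_nat sg) (Z.of_nat b) (Z.of_nat f'))))%Z).
      { apply Z.ltb_ge. exact Eb. }
      set (o := o_sb (Z.of_nat n) (Z.of_nat B) (Z.of_nat f) (Z.of_nat sg) (Z.of_nat b) (Z.of_nat f')) in *.
      assert (HzR : INR m <= IZR (zabs_n (Z.of_nat n) o)).
      { rewrite INR_IZR_INZ. apply IZR_le. unfold zabs_n. exact Hz. }
      assert (Hcond : IZR (zabs_n (Z.of_nat n) o) >= INR n / INR B).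
      { rewrite HnR. replace (INR B * INR m / INR B) with (INR m) by (field; lra). lra. }
      specialize (HG3 o Ho Hcond).
      set (z := IZR (zabs_n (Z.of_nat n) o)) in *.
      set (x := INR n / (INR B * z)) in *.
      assert (Hx : 0 <= x <= 1).
      { assert (Hxe : x * (INR B * z) = INR n) by (unfold x; field; nra).
        assert (0 < INR B * z) by nra.
        split; nra. }
      assert (x ^ (F - 1) <= 1) by (apply pow_le_one; auto).
      assert (0 <= x ^ (F - 1)) by (apply pow_le; lra).
      assert (G o <= eps) by (fold eps in HG3; nra).
      replace (c0 + c0 * A * 0) with c0 by ring.
      apply exp_le. nra. }
  unfold expect_sb.
  set (tot := INR (nsum (odds n) (fun sg => length (filter (badb sg) (seq 0 n))))).
  apply Rle_trans with (/ (INR (length (odds n)) * INR n) * ((c0 * INR n) * INR (length (odds n)) + (c0 * A) * tot)).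
  - apply Rmult_le_compat_l.
    + left. apply Rinv_0_lt_compat. apply Rmult_lt_0_compat; apply lt_0_INR.
      * rewrite HnN, length_odds. lia.
      * lia.
    + replace ((c0 * INR n) * INR (length (odds n)) + (c0 * A) * tot) with
        (sumR (odds n) (fun sg => c0 * INR n + (c0 * A) * INR (length (filter (badb sg) (seq 0 n)))))
        by (unfold tot; rewrite sumR_affine, sumR_INR; reflexivity).
      apply sumR_le. intros sg Hsg.
      apply Rle_trans with (sumR (seq 0 n) (fun b => c0 + (c0 * A) * (if badb sg b then 1 else 0))).
      * apply sumR_le. intros b Hb. apply in_seq in Hb. apply Hpt. lia.
      * rewrite sumR_affine, sumR_ind, length_seq. right. reflexivity.
  - assert (HL : length (odds n) = N) by (rewrite HnN; apply length_odds).
    rewrite HL.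
    assert (HnN' : INR n = 2 * INR N) by (rewrite HnN, mult_INR; reflexivity).
    rewrite HnN'. fold A.
    apply final_ineq with (M := INR m); auto.
    + apply lt_0_INR. lia.
    + rewrite <- HnN'. exact HnR.
    + split; [apply pos_INR|]. unfold tot.
      replace (2 * INR N * INR m) with (INR (n * m)) by (rewrite mult_INR, HnN'; reflexivity).
      apply le_INR. exact Hcnt.
Qed.
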